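(* Let $\mathcal{P}_{16}=\{(a:b:1)\in\mathbb{P}^2(\mathbb{C}) : a,b\in\{1,-1,i,-i\}\}$ and $\mathcal{P}_{12}=\{(0:a:1),(a:0:1),(a:1:0) : a\in\mathbb{C},\ a^4=-1\}$, and let $\mathcal{P}_{28}=\mathcal{P}_{16}\cup\mathcal{P}_{12}$. Then the set of smooth conics in $\mathbb{P}^2(\mathbb{C})$ containing at least $6$ points of $\mathcal{P}_{28}$ has exactly $2736$ elements; among them exactly $2616$ contain exactly $6$ points of $\mathcal{P}_{28}$, exactly $96$ contain exactly $7$ points, and exactly $24$ contain exactly $8$ points (and none contains more than $8$). Moreover, each point of $\mathcal{P}_{16}$ lies on exactly $546$ of these conics and each point of $\mathcal{P}_{12}$ lies on exactly $652$ of them.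
   Context: $\mathcal{P}_{28}$ is the singular set of the curve $\check C$ dual to the Fermat quartic $x^4+y^4+z^4=0$, namely $\check C: x^{12}+3x^8y^4+3x^4y^8+y^{12}+3x^8z^4-21x^4y^4z^4+3y^8z^4+3x^4z^8+3y^4z^8+z^{12}=0$; $\mathcal{P}_{16}$ is the set of its nodes and $\mathcal{P}_{12}$ the set of its $E_6$ singularities. A ''conic'' means a smooth (irreducible) plane curve of degree $2$. *)

(* Defs.v *)
(* complex numbers = algC (algebraic closure of Q in C). *)
From HB Require Import structures.
From mathcomp Require Import all_boot all_order all_algebra all_field.
Set Implicit Arguments. Unset Strict Implicit. Unset Printing Implicit Defensive.
Import Order.TTheory GRing.Theory Num.Theory.
Local Open Scope ring_scope.

(* Points of P^2(C) are represented by nonzero row vectors (x:y:z). *)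
Definition pt (a b c : algC) : 'rV[algC]_3 := \row_(j < 3) [:: a; b; c]`_j.

Definition U4 : seq algC := [:: 1; -1; 'i; - 'i].

(* the four complex roots of a^4 = -1 : w*u, u in U4, where w = 4.-root(-1)
   satisfies w^4 = -1 *)
Definition R4 : seq algC := [seq (4.-root (-1)) * u | u <- U4].

Definition P16 : seq 'rV[algC]_3 := [seq pt a b 1 | a <- U4, b <- U4].
Definition P12 : seq 'rV[algC]_3 :=
  [seq pt 0 a 1 | a <- R4] ++ [seq pt a 0 1 | a <- R4] ++ [seq pt a 1 0 | a <- R4].
Definition P28 : seq 'rV[algC]_3 := P16 ++ P12.

(* A plane conic is given by a nonzero symmetric 3x3 matrix A (the quadratic
   form p A p^T), up to a nonzero scalar; it is smooth iff det A <> 0. *)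
Definition smooth_conic (A : 'M[algC]_3) : Prop := A^T = A /\ \det A != 0.
Definition same_conic (A B : 'M[algC]_3) : Prop := exists2 c : algC, c != 0 & B = c *: A.
Definition on_conic (A : 'M[algC]_3) (p : 'rV[algC]_3) : bool := p *m A *m p^T == 0.

(* number of points of P28 on the conic A (the listed representatives are
   pairwise distinct projective points) *)
Definition npts (A : 'M[algC]_3) : nat := count (on_conic A) P28.

(* Main.v *)
Require Import Defs.
From HB Require Import structures.
From Stdlib Require Import ZArith Lia.
From mathcomp Require Import all_boot all_order all_algebra all_field.
From mathcomp Require Import ssrZ.
Set Implicit Arguments. Unset Strict Implicit. Unset Printing Implicit Defensive.
Import Order.TTheory GRing.Theory Num.Theory.

Record E := mkE { e0 : Z; e1 : Z; e2 : Z; e3 : Z }.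
Definition E2t (x : E) := (e0 x, e1 x, e2 x, e3 x).
Definition t2E (t : Z * Z * Z * Z) := let: (a, b, c, d) := t in mkE a b c d.
Lemma E2tK : cancel E2t t2E. Proof. by case. Qed.
HB.instance Definition _ := Countable.copy E (can_type E2tK).

Definition eadd (x y : E) := mkE (e0 x + e0 y) (e1 x + e1 y) (e2 x + e2 y) (e3 x + e3 y).
Definition eopp (x : E) := mkE (- e0 x) (- e1 x) (- e2 x) (- e3 x).
Definition ezero := mkE 0 0 0 0.
Definition eone := mkE 1 0 0 0.
Definition emul (x y : E) : E :=
  let: mkE a0 a1 a2 a3 := x in let: mkE b0 b1 b2 b3 := y in
  mkE (a0*b0 - a1*b3 - a2*b2 - a3*b1)
      (a0*b1 + a1*b0 - a2*b3 - a3*b2)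
      (a0*b2 + a1*b1 + a2*b0 - a3*b3)
      (a0*b3 + a1*b2 + a2*b1 + a3*b0).

Ltac Ecase := repeat match goal with x : E |- _ => destruct x end.
Fact eaddA : associative eadd. Proof. move=> *; Ecase; rewrite /eadd /ezero /eopp /=; f_equal; lia. Qed.
Fact eaddC : commutative eadd. Proof. move=> *; Ecase; rewrite /eadd /ezero /eopp /=; f_equal; lia. Qed.
Fact eadd0 : left_id ezero eadd. Proof. move=> *; Ecase; rewrite /eadd /ezero /eopp /=; f_equal; lia. Qed.
Fact eaddN : left_inverse ezero eopp eadd. Proof. move=> *; Ecase; rewrite /eadd /ezero /eopp /=; f_equal; lia. Qed.
HB.instance Definition _ := GRing.isZmodule.Build E eaddA eaddC eadd0 eaddN.
Fact emulA : associative emul. Proof. move=> *; Ecase; rewrite /emul /eone; cbv beta iota; f_equal; ring. Qed.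
Fact emulC : commutative emul. Proof. move=> *; Ecase; rewrite /emul /eone; cbv beta iota; f_equal; ring. Qed.
Fact emul1 : left_id eone emul. Proof. move=> *; Ecase; rewrite /emul /eone; cbv beta iota; f_equal; ring. Qed.
Fact emulDl : left_distributive emul eadd. Proof. move=> *; Ecase; rewrite /emul /eadd /=; f_equal; ring. Qed.
Fact eone0 : eone != ezero. Proof. by []. Qed.
HB.instance Definition _ := GRing.Zmodule_isComNzRing.Build E emulA emulC emul1 emulDl eone0.

Local Open Scope ring_scope.
Definition w : algC := 4.-root (-1).
Lemma w4 : w ^+ 4 = -1.
Proof. by rewrite /w rootCK. Qed.

Definition zC (z : Z) : algC := (int_of_Z z)%:~R.
Lemma zCD x y : zC (x + y)%Z = zC x + zC y.
Proof. by rewrite /zC -intrD -(raddfD int_of_Z). Qed.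
Lemma zCM x y : zC (x * y)%Z = zC x * zC y.
Proof. by rewrite /zC -intrM -(rmorphM int_of_Z). Qed.
Lemma zCN x : zC (- x)%Z = - zC x.
Proof. by rewrite /zC -mulrNz -(raddfN int_of_Z). Qed.
Lemma zCB x y : zC (x - y)%Z = zC x - zC y.
Proof. by rewrite -zCN -zCD. Qed.
Lemma zC0 : zC Z0 = 0. Proof. by []. Qed.
Lemma zC1 : zC 1 = 1. Proof. by []. Qed.
Lemma zC0' : zC 0 = 0. Proof. by []. Qed.

From mathcomp Require Import ring.

Definition phi (x : E) : algC :=
  zC (e0 x) + zC (e1 x) * w + zC (e2 x) * w ^+ 2 + zC (e3 x) * w ^+ 3.

Fact phi_additive : additive phi.
Proof.
move=> x y; case: x => a0 a1 a2 a3; case: y => b0 b1 b2 b3.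
rewrite /phi /=. rewrite !zCD !zCN. ring.
Qed.
Fact phi_multiplicative : multiplicative phi.
Proof.
split; last by rewrite /phi /= ?zC1 ?zC0 ?zC0' !mul0r !addr0.
move=> x y; case: x => a0 a1 a2 a3; case: y => b0 b1 b2 b3.
rewrite /phi /= !zCB !zCD !zCM.
set A0 := zC a0; set A1 := zC a1; set A2 := zC a2; set A3 := zC a3.
set B0 := zC b0; set B1 := zC b1; set B2 := zC b2; set B3 := zC b3.
apply/eqP; rewrite -subr_eq0; apply/eqP.
transitivity (- (w ^+ 4 + 1) * ((A1 * B3 + A2 * B2 + A3 * B1) + (A2 * B3 + A3 * B2) * w + A3 * B3 * w ^+ 2)).
  ring.
by rewrite w4 addNr oppr0 mul0r.
Qed.
HB.instance Definition _ := GRing.isAdditive.Build E algC phi phi_additive.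
HB.instance Definition _ := GRing.isMultiplicative.Build E algC phi phi_multiplicative.
From mathcomp Require Import cyclotomic.

Lemma w_prim : 8.-primitive_root w.
Proof.
have w8 : w ^+ 8 = 1 by rewrite -[8%N]/(4 * 2)%N exprM w4 sqrrN expr1n.
case: (prim_order_exists (isT : (0 < 8)%N) w8) => m pm mdvd.
have w41 : (w ^+ 4 == 1) = false.
  by rewrite w4 -subr_eq0 -opprD oppr_eq0 -mulr2n pnatr_eq0.
have : m \in divisors 8 by rewrite -dvdn_divisors.
have h4 := prim_order_dvd pm 4; rewrite w41 in h4.
rewrite (_ : divisors 8 = [:: 1; 2; 4; 8]%N) //; rewrite !inE => /or4P[] /eqP m_def; rewrite m_def in h4 pm => //.
Qed.

Lemma phi_inj0 x : phi x = 0 -> x = 0.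
Proof.
move=> hx.
pose c := fun i => ((int_of_Z (nth Z0 [:: e0 x; e1 x; e2 x; e3 x] i))%:~R : rat).
pose q := \poly_(i < 4) c i.
have hq : (map_poly ratr q).[w] = phi x.
  rewrite (@horner_coef_wide _ 4) ?size_map_poly ?size_poly //.
  rewrite !big_ord_recl big_ord0 !coef_map !coef_poly /=.
  rewrite /c /= !rmorph_int /phi /zC /= expr0 expr1 mulr1 addr0; ring.
have [p [Dp monp] dvp] := minCpolyP w.
have : root (map_poly ratr q) w by rewrite /root hq hx.
rewrite dvp => pq.
have szp : size p = 5%N.
  by rewrite -(size_map_poly (ratr : rat -> algC)) -Dp (minCpoly_cyclotomic w_prim) size_cyclotomic.
have q0 : q = 0.
  apply/eqP; apply: contraT => qn0.
  have := dvdp_leq qn0 pq; rewrite szp.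
  by move=> /leq_trans /(_ (size_poly _ _)).
have hc : forall i, (i < 4)%N -> c i = 0.
  by move=> i hi; have := coef_poly 4 c i; rewrite hi -/q q0 coef0.
have hz : forall i, (i < 4)%N -> nth Z0 [:: e0 x; e1 x; e2 x; e3 x] i = Z0.
  move=> i hi; have := hc i hi; rewrite /c => /eqP; rewrite intr_eq0 => /eqP h.
  by rewrite -[LHS]int_of_ZK h.
case: x hx c q hq pq q0 hc hz => a0 a1 a2 a3 /= _ _ _ _ _ _ _ hz.
by move: (hz 0%N isT) (hz 1%N isT) (hz 2%N isT) (hz 3%N isT) => /= -> -> -> ->.
Qed.

Lemma phi_eq0 x : (phi x == 0) = (x == 0).
Proof. by apply/eqP/eqP => [/phi_inj0 | ->]; rewrite ?rmorph0. Qed.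

Lemma w2 : w ^+ 2 = 'i.
Proof.
have h : (w ^+ 2 - 'i) * (w ^+ 2 + 'i) = 0.
  rewrite -subr_sqr -exprM w4 sqrCi; by rewrite opprK addNr.
move/eqP: h; rewrite mulf_eq0 => /orP[/eqP|/eqP h]; first by move/subr0_eq.
exfalso.
have wi : w ^+ 2 = - 'i by apply/eqP; rewrite -subr_eq0 opprK h.
set a := 'Re w; set b := 'Im w.
have hb : 0 <= b by apply: Im_rootC_ge0.
have hab : a * b *+ 2 = -1.
  have := congr1 (fun z => 'Im z) wi.
  by rewrite expr2 ImM raddfN /= Im_i -/a -/b mulrC mulr2n.
have bne0 : b != 0 by apply/eqP => b0; move: hab; rewrite b0 mulr0 mul0rn => /eqP; rewrite eq_sym oppr_eq0 oner_eq0.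
have ha : a < 0.
  rewrite real_ltNge ?Creal_Re ?rpred0 //; apply/negP => a0.
  have : 0 <= a * b *+ 2 by rewrite mulrn_wge0 // mulr_ge0.
  by rewrite hab oppr_ge0 ler10.
set y := - 'i * w.
have y4 : y ^+ 4 = -1 by rewrite /y exprMn w4 -[4%N]/(2 * 2)%N exprM sqrrN sqrCi sqrrN expr1n mul1r.
have Rey : 'Re y = b by rewrite /y mulNr raddfN /= ReMil opprK.
have Imy : 'Im y = - a by rewrite /y mulNr raddfN /= ImMil.
have := rootC_Re_max (n := 4) (x := -1) (y := y) isT y4.
rewrite Imy oppr_ge0 (ltW ha) Rey -/w -/a => /(_ isT) hle.
have : b < 0 := le_lt_trans hle ha.
by rewrite real_ltNge ?Creal_Im ?rpred0 // hb.
Qed.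

Lemma phiW : phi (mkE 0 1 0 0) = w.
Proof. by rewrite /phi /= ?zC0 ?zC0' zC1 !mul0r mul1r !add0r !addr0. Qed.
Lemma phiW2 : phi (mkE 0 0 1 0) = 'i.
Proof. by rewrite /phi /= ?zC0 ?zC0' zC1 !mul0r mul1r !add0r addr0 w2. Qed.

Record V3 (R : Type) := mk3 { px : R; py : R; pz : R }.
Record V6 (R : Type) := mk6 { k0 : R; k1 : R; k2 : R; k3 : R; k4 : R; k5 : R }.
Arguments mk3 {R}. Arguments mk6 {R}.

Section Gen.
Variable R : comNzRingType.
Implicit Types (p q r s l m x y : V3 R) (d a b : V6 R).
Definition QF d p : R :=
  k0 d * (px p * px p) + k1 d * (py p * py p) + k2 d * (pz p * pz p) +
  (k3 d * (px p * py p) + k4 d * (px p * pz p) + k5 d * (py p * pz p)) *+ 2.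
Definition BF d p q : R :=
  k0 d * (px p * px q) + k1 d * (py p * py q) + k2 d * (pz p * pz q) +
  k3 d * (px p * py q + py p * px q) + k4 d * (px p * pz q + pz p * px q) +
  k5 d * (py p * pz q + pz p * py q).
Definition cross p q : V3 R :=
  mk3 (py p * pz q - pz p * py q) (pz p * px q - px p * pz q) (px p * py q - py p * px q).
Definition lev l p : R := px l * px p + py l * py p + pz l * pz p.
Definition det3v p q r : R := lev (cross p q) r.
Definition cdet d : R :=
  k0 d * k1 d * k2 d + (k3 d * k4 d * k5 d) *+ 2 - k0 d * (k5 d * k5 d)
  - k1 d * (k4 d * k4 d) - k2 d * (k3 d * k3 d).
Definition gram d p q s : V6 R :=
  mk6 (BF d p p) (BF d q q) (BF d s s) (BF d p q) (BF d p s) (BF d q s).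
Definition lprod l m : V6 R :=
  mk6 ((px l * px m) *+ 2) ((py l * py m) *+ 2) ((pz l * pz m) *+ 2)
      (px l * py m + py l * px m) (px l * pz m + pz l * px m) (py l * pz m + pz l * py m).
Definition lin6 (al be : R) a b : V6 R :=
  mk6 (al * k0 a + be * k0 b) (al * k1 a + be * k1 b) (al * k2 a + be * k2 b)
      (al * k3 a + be * k3 b) (al * k4 a + be * k4 b) (al * k5 a + be * k5 b).
Definition scale6 (t : R) d : V6 R :=
  mk6 (t * k0 d) (t * k1 d) (t * k2 d) (t * k3 d) (t * k4 d) (t * k5 d).
Definition add3 p q : V3 R := mk3 (px p + px q) (py p + py q) (pz p + pz q).
Definition scale3 (c : R) p : V3 R := mk3 (c * px p) (c * py p) (c * pz p).

Lemma cdet_gram d p q s : cdet (gram d p q s) = det3v p q s ^+ 2 * cdet d.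
Proof.
case: d => a0 a1 a2 a3 a4 a5; case: p => x1 y1 z1; case: q => x2 y2 z2; case: s => x3 y3 z3.
rewrite /cdet /gram /BF /det3v /lev /cross /=. ring.
Qed.
Lemma BF_addl d p q r : BF d (add3 p q) r = BF d p r + BF d q r.
Proof. rewrite /BF /add3 /=; ring. Qed.
Lemma BF_addr d p q r : BF d r (add3 p q) = BF d r p + BF d r q.
Proof. rewrite /BF /add3 /=; ring. Qed.
Lemma BF_scalel d c p q : BF d (scale3 c p) q = c * BF d p q.
Proof. rewrite /BF /scale3 /=; ring. Qed.
Lemma BF_scaler d c p q : BF d q (scale3 c p) = c * BF d q p.
Proof. rewrite /BF /scale3 /=; ring. Qed.
Lemma BF_sym d p q : BF d p q = BF d q p.
Proof. rewrite /BF /=; ring. Qed.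
Lemma BF_QF d p : BF d p p = QF d p.
Proof. rewrite /BF /QF /=; ring. Qed.
Lemma cramer3 p1 p2 p3 x :
  scale3 (det3v p1 p2 p3) x =
  add3 (add3 (scale3 (lev (cross p2 p3) x) p1) (scale3 (lev (cross p3 p1) x) p2))
       (scale3 (lev (cross p1 p2) x) p3).
Proof.
case: p1 => ? ? ?; case: p2 => ? ? ?; case: p3 => ? ? ?; case: x => ? ? ?.
rewrite /scale3 /add3 /det3v /lev /cross /=; congr mk3; ring.
Qed.
Lemma QF_lprod l m p : QF (lprod l m) p = (lev l p * lev m p) *+ 2.
Proof. rewrite /QF /lprod /lev /=; ring. Qed.
Lemma BF_lprod l m p q : BF (lprod l m) p q = lev l p * lev m q + lev l q * lev m p.
Proof. rewrite /BF /lprod /lev /=; ring. Qed.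
Lemma lev_crossl p q : lev (cross p q) p = 0.
Proof. rewrite /lev /cross /=; ring. Qed.
Lemma lev_crossr p q : lev (cross p q) q = 0.
Proof. rewrite /lev /cross /=; ring. Qed.
Lemma lev_cross_cyc p q r : lev (cross p q) r = lev (cross q r) p.
Proof. rewrite /lev /cross /=; ring. Qed.
Lemma lev_cross_swap p q r : lev (cross p q) r = - lev (cross q p) r.
Proof. rewrite /lev /cross /=; ring. Qed.
Lemma QF_lin6 al be a b p : QF (lin6 al be a b) p = al * QF a p + be * QF b p.
Proof. rewrite /QF /lin6 /=; ring. Qed.
Lemma BF_lin6 al be a b p q : BF (lin6 al be a b) p q = al * BF a p q + be * BF b p q.
Proof. rewrite /BF /lin6 /=; ring. Qed.
Lemma QF_scale6 t d p : QF (scale6 t d) p = t * QF d p.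
Proof. rewrite /QF /scale6 /=; ring. Qed.
Lemma cdet_scale6 t d : cdet (scale6 t d) = t ^+ 3 * cdet d.
Proof. rewrite /cdet /scale6 /=; ring. Qed.
Lemma lin6_scale (t mm nn : R) a b : lin6 (t * nn) (- (t * mm)) a b = scale6 t (lin6 nn (- mm) a b).
Proof. rewrite /lin6 /scale6 /=; f_equal; ring. Qed.
Lemma QF_scale3 c p d : QF d (scale3 c p) = c ^+ 2 * QF d p.
Proof. rewrite /QF /scale3 /=; ring. Qed.
Lemma QF_add3 al be p q d : QF d (add3 (scale3 al p) (scale3 be q)) =
    al ^+ 2 * QF d p + (al * be * BF d p q) *+ 2 + be ^+ 2 * QF d q.
Proof. rewrite /QF /BF /scale3 /add3 /=; ring. Qed.
End Gen.

Section Map.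
Variables (R S : comNzRingType) (f : {rmorphism R -> S}).
Definition map3 (p : V3 R) : V3 S := mk3 (f (px p)) (f (py p)) (f (pz p)).
Definition map6 (d : V6 R) : V6 S :=
  mk6 (f (k0 d)) (f (k1 d)) (f (k2 d)) (f (k3 d)) (f (k4 d)) (f (k5 d)).
Lemma map_QF d p : f (QF d p) = QF (map6 d) (map3 p).
Proof. by rewrite /QF /= !(rmorphD, rmorphM, rmorphMn). Qed.
Lemma map_lev l p : f (lev l p) = lev (map3 l) (map3 p).
Proof. by rewrite /lev /= !(rmorphD, rmorphM). Qed.
Lemma map_cross p q : map3 (cross p q) = cross (map3 p) (map3 q).
Proof. by rewrite /cross /map3 /= !(rmorphB, rmorphM). Qed.
Lemma map_cdet d : f (cdet d) = cdet (map6 d).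
Proof. by rewrite /cdet /= !(rmorphB, rmorphD, rmorphM, rmorphMn). Qed.
Lemma map_lprod l m : map6 (lprod l m) = lprod (map3 l) (map3 m).
Proof. by rewrite /lprod /map6 /= !(rmorphD, rmorphM, rmorphMn). Qed.
Lemma map_lin6 al be a b : map6 (lin6 al be a b) = lin6 (f al) (f be) (map6 a) (map6 b).
Proof. by rewrite /lin6 /map6 /= !(rmorphD, rmorphM). Qed.
End Map.
Arguments map3 {R S} f p. Arguments map6 {R S} f d.
Section AlgC.
Implicit Types (p q r s x y : V3 algC) (d a : V6 algC).

Lemma two_neq0 : (2 : algC) != 0.
Proof. by rewrite pnatr_eq0. Qed.

Lemma BF_all0 a p1 p2 p3 :
  det3v p1 p2 p3 != 0 ->
  QF a p1 = 0 -> QF a p2 = 0 -> QF a p3 = 0 ->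
  BF a p1 p2 = 0 -> BF a p1 p3 = 0 -> BF a p2 p3 = 0 ->
  forall x y, BF a x y = 0.
Proof.
move=> hD h1 h2 h3 h12 h13 h23 x y.
have h21 : BF a p2 p1 = 0 by rewrite BF_sym.
have h31 : BF a p3 p1 = 0 by rewrite BF_sym.
have h32 : BF a p3 p2 = 0 by rewrite BF_sym.
have e : BF a (scale3 (det3v p1 p2 p3) x) (scale3 (det3v p1 p2 p3) y) = 0.
  rewrite (cramer3 p1 p2 p3 x) (cramer3 p1 p2 p3 y) !BF_addl !BF_addr !BF_scalel !BF_scaler !BF_QF.
  by rewrite h1 h2 h3 h12 h13 h23 h21 h31 h32 !mulr0 !addr0.
move: e; rewrite BF_scalel BF_scaler => /eqP; rewrite !mulf_eq0 (negbTE hD) /=.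
by move/eqP.
Qed.

Definition e3x : V3 algC := mk3 1 0 0.
Definition e3y : V3 algC := mk3 0 1 0.
Definition e3z : V3 algC := mk3 0 0 1.

Lemma V6_BF a : a = mk6 (BF a e3x e3x) (BF a e3y e3y) (BF a e3z e3z)
                        (BF a e3x e3y) (BF a e3x e3z) (BF a e3y e3z).
Proof. case: a => a0 a1 a2 a3 a4 a5; rewrite /BF /=; congr mk6; ring. Qed.

Lemma UL4 a p1 p2 p3 p4 :
  det3v p1 p2 p3 != 0 -> det3v p1 p2 p4 != 0 -> det3v p1 p3 p4 != 0 ->
  QF a p1 = 0 -> QF a p2 = 0 -> QF a p3 = 0 -> QF a p4 = 0 ->
  BF a p1 p2 = 0 -> BF a p1 p4 = 0 -> a = mk6 0 0 0 0 0 0.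
Proof.
move=> hD h124 h134 h1 h2 h3 h4 h12 h14.
set D := det3v p1 p2 p3.
have c3 : lev (cross p1 p2) p4 != 0 by [].
have c2 : lev (cross p3 p1) p4 != 0.
  have -> : lev (cross p3 p1) p4 = - det3v p1 p3 p4.
    by rewrite /det3v /lev /cross /=; ring.
  by rewrite oppr_eq0.
have h21 : BF a p2 p1 = 0 by rewrite BF_sym.
have h13 : BF a p1 p3 = 0.
  have : BF a p1 (scale3 D p4) = 0 by rewrite BF_scaler h14 mulr0.
  rewrite /D (cramer3 p1 p2 p3 p4) !BF_addr !BF_scaler BF_QF h1 h12 !mulr0 !add0r => /eqP.
  by rewrite mulf_eq0 (negbTE c3) /= => /eqP.
have h31 : BF a p3 p1 = 0 by rewrite BF_sym.
have h23 : BF a p2 p3 = 0.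
  have : BF a (scale3 D p4) (scale3 D p4) = 0 by rewrite BF_scaler BF_scalel BF_QF h4 !mulr0.
  rewrite /D (cramer3 p1 p2 p3 p4) !BF_addl !BF_addr !BF_scalel !BF_scaler !BF_QF.
  rewrite h1 h2 h3 h12 h21 h13 h31 !mulr0 !addr0 !add0r (BF_sym a p3 p2).
  rewrite [X in _ + X]mulrCA -mulr2n -mulr_natr => /eqP; rewrite !mulf_eq0 (negbTE c2) (negbTE c3) (negbTE two_neq0) /=.
  by rewrite orbF => /eqP.
have := BF_all0 hD h1 h2 h3 h12 h13 h23 => hall.
by rewrite (V6_BF a) !hall.
Qed.

Definition sub6 a b : V6 algC := mk6 (k0 a - k0 b) (k1 a - k1 b) (k2 a - k2 b) (k3 a - k3 b) (k4 a - k4 b) (k5 a - k5 b).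
Lemma QF_sub6 a b p : QF (sub6 a b) p = QF a p - QF b p.
Proof. rewrite /QF /sub6 /=; ring. Qed.
Lemma BF_sub6 a b p q : BF (sub6 a b) p q = BF a p q - BF b p q.
Proof. rewrite /BF /sub6 /=; ring. Qed.
Lemma sub6_eq0 a b : sub6 a b = mk6 0 0 0 0 0 0 -> a = b.
Proof.
case: a => ? ? ? ? ? ?; case: b => ? ? ? ? ? ?; rewrite /sub6 /= => [[]].
by do 6! move=> /subr0_eq ->.
Qed.

Lemma pencil a u v p1 p2 p3 p4 :
  det3v p1 p2 p3 != 0 -> det3v p1 p2 p4 != 0 -> det3v p1 p3 p4 != 0 ->
  QF u p1 = 0 -> QF u p2 = 0 -> QF u p3 = 0 -> QF u p4 = 0 ->
  QF v p1 = 0 -> QF v p2 = 0 -> QF v p3 = 0 -> QF v p4 = 0 ->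
  BF u p1 p2 = 0 -> BF v p1 p4 = 0 -> BF u p1 p4 != 0 -> BF v p1 p2 != 0 ->
  QF a p1 = 0 -> QF a p2 = 0 -> QF a p3 = 0 -> QF a p4 = 0 ->
  exists al be, a = lin6 al be u v.
Proof.
move=> hD h124 h134 u1 u2 u3 u4 v1 v2 v3 v4 u12 v14 u14 v12 a1 a2 a3 a4.
set al := BF a p1 p4 / BF u p1 p4; set be := BF a p1 p2 / BF v p1 p2.
exists al, be.
set d := sub6 a (lin6 al be u v).
have hd : d = mk6 0 0 0 0 0 0.
  apply: (UL4 hD h124 h134); rewrite /d ?QF_sub6 ?BF_sub6 ?QF_lin6 ?BF_lin6.
  - by rewrite a1 u1 v1 !mulr0 addr0 subrr.
  - by rewrite a2 u2 v2 !mulr0 addr0 subrr.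
  - by rewrite a3 u3 v3 !mulr0 addr0 subrr.
  - by rewrite a4 u4 v4 !mulr0 addr0 subrr.
  - by rewrite u12 mulr0 add0r /be divfK // subrr.
  - by rewrite v14 mulr0 addr0 /al divfK // subrr.
exact: sub6_eq0 hd.
Qed.

Lemma collinear_degenerate a p q r s (al be ga : algC) :
  QF a p = 0 -> QF a q = 0 -> QF a r = 0 ->
  scale3 ga r = add3 (scale3 al p) (scale3 be q) ->
  al != 0 -> be != 0 -> det3v p q s != 0 -> cdet a = 0.
Proof.
move=> hp hq hr hrel hal hbe hD.
have e1 := QF_scale3 ga r a.
have e2 := QF_add3 al be p q a.
have hpq : BF a p q = 0.
  move: e2; rewrite -hrel e1 hr hp hq !mulr0 !addr0 add0r => /esym/eqP.
  rewrite -mulr_natr !mulf_eq0 (negbTE hal) (negbTE hbe) (negbTE two_neq0) /=.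
  by rewrite orbF => /eqP.
have := cdet_gram a p q s.
rewrite /gram !BF_QF hp hq hpq {1}/cdet /= !(mul0r, mulr0, mul0rn, subr0, addr0).
move=> /esym/eqP; rewrite mulf_eq0 expf_eq0 (negbTE hD) andbF /=.
by move/eqP.
Qed.

Lemma dstep (al be m n : algC) :
  (al != 0) || (be != 0) -> al * m + be * n = 0 -> (m != 0) || (n != 0) ->
  exists2 t, t != 0 & (al = t * n /\ be = - (t * m)).
Proof.
move=> hab hs; have [m0|mn0] := eqVneq m 0.
  rewrite m0 /= => nn0; move: hs; rewrite m0 mulr0 add0r => /eqP.
  rewrite mulf_eq0 (negbTE nn0) orbF => /eqP be0.
  move: hab; rewrite be0 eqxx orbF => an0.
  exists (al / n); first by rewrite mulf_neq0 ?invr_eq0.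
  by rewrite divfK // mulr0 oppr0.
move=> _; exists (- be / m).
  move: hab; apply: contraTneq => /eqP; rewrite mulf_eq0 invr_eq0 (negbTE mn0) orbF oppr_eq0 => /eqP be0.
  by move: hs; rewrite be0 mul0r addr0 => /eqP; rewrite mulf_eq0 (negbTE mn0) orbF => ->; rewrite eqxx.
split; last by rewrite divfK // opprK.
apply: (mulIf mn0); rewrite mulrAC divfK // mulNr.
by apply/eqP; rewrite -addr_eq0 hs.
Qed.
End AlgC.

Definition i0 : 'I_3 := ord0.
Definition i1 : 'I_3 := lift ord0 ord0.
Definition i2 : 'I_3 := lift ord0 (lift ord0 ord0).
Definition coords (A : 'M[algC]_3) : V6 algC :=
  mk6 (A i0 i0) (A i1 i1) (A i2 i2) (A i0 i1) (A i0 i2) (A i1 i2).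
Definition ptv (p : V3 algC) := pt (px p) (py p) (pz p).

Lemma sym_entry (A : 'M[algC]_3) i j : A^T = A -> A j i = A i j.
Proof. by move=> hA; rewrite -{1}hA mxE. Qed.

Lemma on_conicE A p : A^T = A -> on_conic A (ptv p) = (QF (coords A) p == 0).
Proof.
move=> hA; rewrite /on_conic.
have -> : (ptv p *m A *m (ptv p)^T == 0) = ((ptv p *m A *m (ptv p)^T) 0 0 == 0).
  apply/eqP/eqP => [-> | h]; first by rewrite mxE.
  by apply/matrixP => i j; rewrite (ord1 i) (ord1 j) h mxE.
congr (_ == 0).
rewrite !mxE !big_ord_recl big_ord0 /=.
rewrite !mxE !big_ord_recl !big_ord0 /= !mxE /=.
rewrite /QF /coords /=.
rewrite (sym_entry i0 i1 hA) (sym_entry i0 i2 hA) (sym_entry i1 i2 hA).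
rewrite /i0 /i1 /i2. ring.
Qed.

Lemma det3E (A : 'M[algC]_3) : \det A =
  A i0 i0 * (A i1 i1 * A i2 i2 - A i1 i2 * A i2 i1)
  - A i0 i1 * (A i1 i0 * A i2 i2 - A i1 i2 * A i2 i0)
  + A i0 i2 * (A i1 i0 * A i2 i1 - A i1 i1 * A i2 i0).
Proof.
rewrite (expand_det_row _ ord0) !big_ord_recl big_ord0 /cofactor.
rewrite !(expand_det_row _ ord0) !big_ord_recl !big_ord0 /cofactor !det_mx11 /=.
rewrite !mxE.
pose f (m n : nat) := A (inord m) (inord n).
have Af : forall i j, A i j = f i j by move=> i j; rewrite /f !inord_val.
rewrite !Af /=. ring.
Qed.

Lemma detE A : A^T = A -> \det A = cdet (coords A).
Proof.
move=> hA; rewrite det3E /cdet /coords /=.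
rewrite (sym_entry i0 i1 hA) (sym_entry i0 i2 hA) (sym_entry i1 i2 hA); ring.
Qed.

Lemma ord3P (i : 'I_3) : [\/ i = i0, i = i1 | i = i2].
Proof.
case: i => [[|[|[|m]]] hm].
- by apply: Or31; apply: val_inj.
- by apply: Or32; apply: val_inj.
- by apply: Or33; apply: val_inj.
- by [].
Qed.

Lemma sym_eq (A B : 'M[algC]_3) : A^T = A -> B^T = B -> coords A = coords B -> A = B.
Proof.
move=> hA hB; case=> h00 h11 h22 h01 h02 h12.
apply/matrixP => i j.
case: (ord3P i) => ->; case: (ord3P j) => ->;
  rewrite ?(sym_entry i0 i1 hA, sym_entry i0 i2 hA, sym_entry i1 i2 hA,
            sym_entry i0 i1 hB, sym_entry i0 i2 hB, sym_entry i1 i2 hB);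
  by [].
Qed.

Definition gsym (d : V6 algC) (m n : nat) : algC :=
  match m, n with
  | 0, 0 => k0 d | 1, 1 => k1 d | 2, 2 => k2 d
  | 0, 1 => k3 d | 1, 0 => k3 d | 0, 2 => k4 d | 2, 0 => k4 d
  | _, _ => k5 d end.
Definition conmat (d : V6 algC) : 'M[algC]_3 := \matrix_(i, j) gsym d i j.

Lemma conmat_sym d : (conmat d)^T = conmat d.
Proof.
apply/matrixP => i j; rewrite !mxE.
by case: (ord3P i) => ->; case: (ord3P j) => ->.
Qed.

Lemma coords_conmat d : coords (conmat d) = d.
Proof. by case: d => *; rewrite /coords !mxE. Qed.


Lemma same_conic_scale A d t : A^T = A -> t != 0 -> coords A = scale6 t d ->
  same_conic A (conmat d).
Proof.
move=> hA ht hc; exists t^-1; first by rewrite invr_eq0.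
have -> : A = t *: conmat d.
  apply: sym_eq => //.
    by rewrite linearZ /= conmat_sym.
  by rewrite hc /coords /scale6 !mxE /=.
by rewrite scalerA mulVf // scale1r.
Qed.

Lemma phiN x : phi (- x) = - phi x. Proof. exact: rmorphN. Qed.
Lemma phi1 : phi 1 = 1. Proof. exact: rmorph1. Qed.
Lemma phi0 : phi 0 = 0. Proof. exact: rmorph0. Qed.
Lemma phiM x y : phi (x * y) = phi x * phi y. Proof. exact: rmorphM. Qed.

Definition EW : E := mkE 0 1 0 0.
Definition EW2 : E := mkE 0 0 1 0.
Definition U4E : seq E := [:: 1; -1; EW2; - EW2].
Definition R4E : seq E := [seq EW * u | u <- U4E].
Definition P16E : seq (V3 E) := [seq mk3 a b 1 | a <- U4E, b <- U4E].
Definition P12E : seq (V3 E) :=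
  [seq mk3 0 a 1 | a <- R4E] ++ [seq mk3 a 0 1 | a <- R4E] ++ [seq mk3 a 1 0 | a <- R4E].
Definition P28E : seq (V3 E) := P16E ++ P12E.
Definition p0E : V3 E := mk3 0 0 0.
Definition pE (i : nat) : V3 E := nth p0E P28E i.
Definition ptC (q : V3 E) : 'rV[algC]_3 := ptv (map3 phi q).

Lemma U4_eq : U4 = map phi U4E.
Proof. by rewrite /U4 /U4E /= !phiN !phi1 /EW2 phiW2. Qed.
Lemma R4_eq : R4 = map phi R4E.
Proof.
rewrite /R4 /R4E U4_eq -!map_comp; apply: eq_map => u /=.
by rewrite phiM /EW phiW.
Qed.
Lemma P16_eq : P16 = map ptC P16E.
Proof.
rewrite /P16 /P16E U4_eq /=.
by rewrite /ptC /ptv /map3 /= !phi1 !phiN ?phi1.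
Qed.
Lemma P12_eq : P12 = map ptC P12E.
Proof.
rewrite /P12 /P12E R4_eq !map_cat -!map_comp.
by congr (_ ++ _ ++ _); apply: eq_map => a; rewrite /ptC /ptv /map3 /= ?phi0 ?phi1.
Qed.
Lemma P28_eq : P28 = map ptC P28E.
Proof. by rewrite /P28 /P28E map_cat P16_eq P12_eq. Qed.
Lemma size_P28E : size P28E = 28%N. Proof. by []. Qed.
Lemma nth_P28 i : (i < 28)%N -> nth 0 P28 i = ptC (pE i).
Proof. by move=> hi; rewrite P28_eq (nth_map p0E) // size_P28E. Qed.

Definition V6t (R : Type) (d : V6 R) := (k0 d, k1 d, k2 d, k3 d, k4 d, k5 d).
Definition tV6 (R : Type) (t : R * R * R * R * R * R) : V6 R :=
  let: (a, b, c, d, e, f) := t in mk6 a b c d e f.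
Lemma V6tK (R : Type) : cancel (@V6t R) (@tV6 R). Proof. by case. Qed.
HB.instance Definition _ (R : eqType) := Equality.copy (V6 R) (can_type (@V6tK R)).

Definition ltab : seq (seq (seq E)) :=
  [seq [seq (let l := cross (pE a) (pE b) in [seq lev l (pE i) | i <- iota 0 28]) | b <- iota 0 28] | a <- iota 0 28].
Definition Lt (t : seq (seq (seq E))) a b i : E := nth 0 (nth [::] (nth [::] t a) b) i.

Fixpoint subs (k : nat) (s : seq nat) : seq (seq nat) :=
  match k with
  | 0 => [:: [::]]
  | k'.+1 => match s with
             | [::] => [::]
             | x :: s' => [seq x :: r | r <- subs k' s'] ++ subs k s'
             end
  end.

Definition coll_try (p q r : V3 E) (ga al be : E) : bool :=
  if ga == 0 then false else if al == 0 then false else if be == 0 then false else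
  if ga * px r == al * px p + be * px q then
  if ga * py r == al * py p + be * py q then
     ga * pz r == al * pz p + be * pz q else false else false.
Definition coll_ok (p q r : V3 E) : bool :=
  let n := cross p q in let a := cross r q in let b := cross p r in
  if coll_try p q r (px n) (px a) (px b) then true else
  if coll_try p q r (py n) (py a) (py b) then true else
  coll_try p q r (pz n) (pz a) (pz b).

Definition conicE (i1 i2 i3 i4 : nat) (u5 v5 : E) : V6 E :=
  lin6 v5 (- u5) (lprod (cross (pE i1) (pE i2)) (cross (pE i3) (pE i4)))
                 (lprod (cross (pE i1) (pE i4)) (cross (pE i2) (pE i3))).

Definition scan5 (Q : seq nat) (i1 i2 i3 i4 : nat)
   (us vs : seq E) (i5 : nat) : option (option (V6 E)) :=
  let u5 := nth 0 us i5 in let v5 := nth 0 vs i5 in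
  if (u5 == 0) && (v5 == 0) then None else
  let P := [seq i <- iota 0 28 | v5 * nth 0 us i - u5 * nth 0 vs i == 0] in
  if take 5%N P == rcons Q i5 then
    if (5 < size P)%N then
      let c := conicE i1 i2 i3 i4 u5 v5 in
      if cdet c == 0 then Some None else Some (Some c)
    else Some None
  else Some None.

Fixpoint collect5 (f : nat -> option (option (V6 E))) (s : seq nat) : option (seq (V6 E)) :=
  match s with
  | [::] => Some [::]
  | i :: s' => match f i with
               | None => None
               | Some o => match collect5 f s' with
                           | None => None
                           | Some l => Some (match o with Some c => c :: l | None => l end)
                           end
               end
  end.

Definition scanQ (t : seq (seq (seq E))) (Q : seq nat) : option (seq (V6 E)) :=
  match Q with
  | [:: i1; i2; i3; i4] =>
    if Lt t i1 i2 i3 == 0 then (if coll_ok (pE i1) (pE i2) (pE i3) then Some [::] else None) else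
    if Lt t i1 i2 i4 == 0 then (if coll_ok (pE i1) (pE i2) (pE i4) then Some [::] else None) else
    if Lt t i1 i3 i4 == 0 then (if coll_ok (pE i1) (pE i3) (pE i4) then Some [::] else None) else
    if Lt t i2 i3 i4 == 0 then (if coll_ok (pE i2) (pE i3) (pE i4) then Some [::] else None) else
    let us := [seq Lt t i1 i2 i * Lt t i3 i4 i | i <- iota 0 28] in
    let vs := [seq Lt t i1 i4 i * Lt t i2 i3 i | i <- iota 0 28] in
    collect5 (scan5 Q i1 i2 i3 i4 us vs) (iota i4.+1 (27 - i4))
  | _ => None
  end.

Definition results := let t := ltab in [seq scanQ t Q | Q <- subs 4 (iota 0 28)].
Definition gen (r : seq (option (seq (V6 E)))) := flatten [seq odflt [::] o | o <- r].
Definition patE (c : V6 E) : seq nat := [seq i <- iota 0 28 | QF c (pE i) == 0].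

Definition BCcheck : bool :=
  let r := results in let g := gen r in let ps := map patE g in
  [&& all (fun o => if o is Some _ then true else false) r,
      size g == 2736%N,
      all (fun c => cdet c != 0) g,
      all (fun pt => 6 <= size pt <= 8)%N ps,
      count (fun pt => size pt == 6%N) ps == 2616%N,
      count (fun pt => size pt == 7%N) ps == 96%N,
      count (fun pt => size pt == 8%N) ps == 24%N,
      uniq ps,
      all (fun i => count (fun pt => i \in pt) ps == 546%N) (iota 0 16) &
      all (fun i => count (fun pt => i \in pt) ps == 652%N) (iota 16 12)].

Lemma BC_ok : BCcheck.
Proof. vm_compute. reflexivity. Qed.

Lemma Lt_ltab a b i : (a < 28)%N -> (b < 28)%N -> (i < 28)%N ->
  Lt ltab a b i = lev (cross (pE a) (pE b)) (pE i).
Proof.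
move=> ha hb hi; rewrite /Lt /ltab.
rewrite (nth_map 0%N) ?size_iota // nth_iota // add0n.
rewrite (nth_map 0%N) ?size_iota // nth_iota // add0n.
by rewrite (nth_map 0%N) ?size_iota // nth_iota // add0n.
Qed.

Lemma subs_complete l : forall k s, subseq s l -> size s = k -> s \in subs k l.
Proof.
elim: l => [|x l IH] [|k] s /=.
- by move/eqP => -> _; rewrite inE.
- by move/eqP => -> .
- by case: s => // _ _; rewrite inE.
case: s => [|y s] //= hs [hk].
rewrite mem_cat; case: eqP hs => [-> hs|_ hs].
  by rewrite (map_f (cons x)) // IH.
by rewrite IH ?orbT //= hk.
Qed.

Lemma collect5P f s l i : collect5 f s = Some l -> i \in s ->
  exists o, f i = Some o /\ (forall c, o = Some c -> c \in l).
Proof.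
elim: s l => [|j s IH] l //=.
case hf: (f j) => [o|] //; case hc: (collect5 f s) => [l'|] // [<-].
rewrite inE => /orP[/eqP ->|his].
  exists o; split => // c ->; by rewrite inE eqxx.
have [o' [h1 h2]] := IH l' hc his.
exists o'; split => // c /h2 hcl; case: o {hf} => [c'|] //; by rewrite inE hcl orbT.
Qed.

Lemma phiD x y : phi (x + y) = phi x + phi y. Proof. exact: rmorphD. Qed.
Lemma phiB x y : phi (x - y) = phi x - phi y. Proof. exact: rmorphB. Qed.

Lemma lev_e3x (l : V3 algC) : lev l e3x = px l.
Proof. by rewrite /lev /= mulr1 !mulr0 !addr0. Qed.
Lemma lev_e3y (l : V3 algC) : lev l e3y = py l.
Proof. by rewrite /lev /= mulr1 !mulr0 add0r addr0. Qed.
Lemma lev_e3z (l : V3 algC) : lev l e3z = pz l.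
Proof. by rewrite /lev /= mulr1 !mulr0 !add0r. Qed.

Lemma coll_try_sound a p q r ga al be s :
  coll_try p q r ga al be ->
  det3v (map3 phi p) (map3 phi q) s = phi ga ->
  QF a (map3 phi p) = 0 -> QF a (map3 phi q) = 0 -> QF a (map3 phi r) = 0 ->
  cdet a = 0.
Proof.
rewrite /coll_try.
case: eqP => // /eqP hga; case: eqP => // /eqP hal; case: eqP => // /eqP hbe.
case: eqP => // hx; case: eqP => // hy /eqP hz hdet hp hq hr.
apply: (collinear_degenerate (al := phi al) (be := phi be) (ga := phi ga) (s := s) hp hq hr).
- by rewrite /scale3 /add3 /map3 /=; congr mk3; rewrite -!phiM -phiD ?hx ?hy ?hz.
- by rewrite phi_eq0.
- by rewrite phi_eq0.
- by rewrite hdet phi_eq0.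
Qed.

Lemma coll_ok_sound a p q r :
  coll_ok p q r ->
  QF a (map3 phi p) = 0 -> QF a (map3 phi q) = 0 -> QF a (map3 phi r) = 0 ->
  cdet a = 0.
Proof.
rewrite /coll_ok => h hp hq hr.
have dx : det3v (map3 phi p) (map3 phi q) e3x = phi (px (cross p q)).
  by rewrite /det3v lev_e3x -map_cross.
have dy : det3v (map3 phi p) (map3 phi q) e3y = phi (py (cross p q)).
  by rewrite /det3v lev_e3y -map_cross.
have dz : det3v (map3 phi p) (map3 phi q) e3z = phi (pz (cross p q)).
  by rewrite /det3v lev_e3z -map_cross.
move: h; case: ifP => [h _|_]; first exact: (coll_try_sound h dx).
case: ifP => [h _|_ h]; first exact: (coll_try_sound h dy).
exact: (coll_try_sound h dz).
Qed.

Lemma on_conic_E c q : on_conic (conmat (map6 phi c)) (ptC q) = (QF c q == 0).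
Proof. by rewrite /ptC on_conicE ?conmat_sym // coords_conmat -map_QF phi_eq0. Qed.

Lemma map_pE_iota : map pE (iota 0 28) = P28E.
Proof. exact: (mkseq_nth p0E P28E). Qed.

Lemma npts_sym A : A^T = A ->
  npts A = size [seq i <- iota 0 28 | QF (coords A) (map3 phi (pE i)) == 0].
Proof.
move=> hA; rewrite /npts P28_eq count_map size_filter -map_pE_iota count_map.
by apply: eq_count => q /=; rewrite /ptC on_conicE.
Qed.

Lemma npts_E c : npts (conmat (map6 phi c)) = size (patE c).
Proof.
rewrite /npts P28_eq count_map /patE size_filter -map_pE_iota count_map.
by apply: eq_count => q /=; rewrite on_conic_E.
Qed.

Lemma on_conic_scale (B : 'M[algC]_3) k p : k != 0 -> on_conic (k *: B) p = on_conic B p.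
Proof.
by move=> hk; rewrite /on_conic -scalemxAr -scalemxAl scalemx_eq0 (negbTE hk).
Qed.

Lemma results_eq : results = map (scanQ ltab) (subs 4 (iota 0 28)).
Proof. by []. Qed.

Lemma gen_mem Q l c : Q \in subs 4 (iota 0 28) -> scanQ ltab Q = Some l -> c \in l ->
  c \in gen results.
Proof.
move=> hQ hs hc; rewrite /gen; apply/flattenP; exists l; last exact: hc.
have -> : l = odflt [::] (scanQ ltab Q) by rewrite hs.
by rewrite results_eq -map_comp; exact: (map_f _ hQ).
Qed.

Lemma mulrn2_eq0 (x : algC) : (x *+ 2 == 0) = (x == 0).
Proof. by rewrite -mulr_natr mulf_eq0 (negbTE two_neq0) orbF. Qed.

Lemma hL a b i : (a < 28)%N -> (b < 28)%N -> (i < 28)%N ->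
  lev (cross (map3 phi (pE a)) (map3 phi (pE b))) (map3 phi (pE i)) = phi (Lt ltab a b i).
Proof. by move=> ha hb hi; rewrite Lt_ltab // map_lev map_cross. Qed.

Definition gR : seq (V6 E) := locked (gen results).
Lemma gR_E : gR = gen results. Proof. by rewrite /gR -lock. Qed.
Definition psR := map patE gR.
Lemma BC_unf : [&& all (fun o => if o is Some _ then true else false) results,
      size gR == 2736%N,
      all (fun c => cdet c != 0) gR,
      all (fun pt => 6 <= size pt <= 8)%N psR,
      count (fun pt => size pt == 6%N) psR == 2616%N,
      count (fun pt => size pt == 7%N) psR == 96%N,
      count (fun pt => size pt == 8%N) psR == 24%N,
      uniq psR,
      all (fun i => count (fun pt => i \in pt) psR == 546%N) (iota 0 16) &
      all (fun i => count (fun pt => i \in pt) psR == 652%N) (iota 16 12)].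
Proof. rewrite /psR gR_E; exact: BC_ok. Qed.
Lemma all_some : all (fun o => if o is Some _ then true else false) results.
Proof. by case/andP: BC_unf. Qed.
Lemma BC_size : size gR = 2736%N.
Proof. by case/and3P: BC_unf => _ /eqP. Qed.
Lemma BC_det : all (fun c => cdet c != 0) gR.
Proof. by case/and4P: BC_unf. Qed.
Lemma BC_6_8 : all (fun pt => 6 <= size pt <= 8)%N psR.
Proof. by case/and5P: BC_unf => _ _ _ h _. Qed.
Lemma BC_rest : [&& count (fun pt => size pt == 6%N) psR == 2616%N,
      count (fun pt => size pt == 7%N) psR == 96%N,
      count (fun pt => size pt == 8%N) psR == 24%N,
      uniq psR,
      all (fun i => count (fun pt => i \in pt) psR == 546%N) (iota 0 16) &
      all (fun i => count (fun pt => i \in pt) psR == 652%N) (iota 16 12)].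
Proof. by case/and5P: BC_unf => _ _ _ _. Qed.

Lemma scanQ_some Q : Q \in subs 4 (iota 0 28) -> exists l, scanQ ltab Q = Some l.
Proof.
move=> hQ; have := all_some; rewrite results_eq all_map => /allP /(_ Q hQ) /=.
by case: (scanQ ltab Q) => [l|] // _; exists l.
Qed.

Lemma mulrn2E (x : E) : (x *+ 2 == 0) = (x == 0).
Proof.
have phiMn : phi (x *+ 2) = phi x *+ 2 by exact: rmorphMn.
by rewrite -[x *+ 2 == 0]phi_eq0 phiMn mulrn2_eq0 phi_eq0.
Qed.

Lemma complete (A : 'M[algC]_3) : smooth_conic A -> (6 <= npts A)%N ->
  exists2 c, c \in gen results & same_conic A (conmat (map6 phi c)).
Proof.
case=> hA hdet hn.
set a := coords A.
have ha : cdet a != 0 by rewrite /a -detE.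
rewrite npts_sym // in hn.
set T := [seq i <- iota 0 28 | QF a (map3 phi (pE i)) == 0] in hn.
have Tsub : subseq T (iota 0 28) by apply: filter_subseq.
have Tsort : sorted ltn T by apply: sorted_filter; [exact: ltn_trans | exact: iota_ltn_sorted].
have Tlt : forall i, i \in T -> (i < 28)%N by move=> i; rewrite mem_filter mem_iota => /andP[_ /andP[_]].
have Tvan : forall i, i \in T -> QF a (map3 phi (pE i)) = 0 by move=> i; rewrite mem_filter => /andP[/eqP].
have hQ : take 4 T \in subs 4 (iota 0 28).
  apply: subs_complete; first exact: (subseq_trans (take_subseq _ _) Tsub).
  by rewrite size_take (leq_trans _ hn).
have [l hl] := scanQ_some hQ.
have [t1 [t2 [t3 [t4 [t5 [T' hT]]]]]] : exists t1 t2 t3 t4 t5 T', T = [:: t1, t2, t3, t4, t5 & T'].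
  by move: hn; case: (T) => [|x1 [|x2 [|x3 [|x4 [|x5 T']]]]] //= _; do 6 eexists.
have e4 : take 4 T = [:: t1; t2; t3; t4] by rewrite hT.
rewrite e4 in hl hQ.
have hl0 := hl.
have v1 : QF a (map3 phi (pE t1)) = 0 by apply: Tvan; rewrite hT !inE eqxx.
have v2 : QF a (map3 phi (pE t2)) = 0 by apply: Tvan; rewrite hT !inE eqxx !orbT.
have v3 : QF a (map3 phi (pE t3)) = 0 by apply: Tvan; rewrite hT !inE eqxx !orbT.
have v4 : QF a (map3 phi (pE t4)) = 0 by apply: Tvan; rewrite hT !inE eqxx !orbT.
have v5 : QF a (map3 phi (pE t5)) = 0 by apply: Tvan; rewrite hT !inE eqxx !orbT.
have l1 : (t1 < 28)%N by apply: Tlt; rewrite hT !inE eqxx.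
have l2 : (t2 < 28)%N by apply: Tlt; rewrite hT !inE eqxx !orbT.
have l3 : (t3 < 28)%N by apply: Tlt; rewrite hT !inE eqxx !orbT.
have l4 : (t4 < 28)%N by apply: Tlt; rewrite hT !inE eqxx !orbT.
have l5 : (t5 < 28)%N by apply: Tlt; rewrite hT !inE eqxx !orbT.
have l45 : (t4 < t5)%N by move: Tsort; rewrite hT /= => /and5P[_ _ _ ->].
have ncol : forall x y z, coll_ok (pE x) (pE y) (pE z) ->
    QF a (map3 phi (pE x)) = 0 -> QF a (map3 phi (pE y)) = 0 -> QF a (map3 phi (pE z)) = 0 -> False.
  by move=> x y z hc hx hy hz; move: ha; rewrite (coll_ok_sound hc hx hy hz) eqxx.
move: hl; rewrite /scanQ.
case: ifP => [_|/negbT d123]; first by case: ifP => [hc _|//]; case: (ncol _ _ _ hc v1 v2 v3).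
case: ifP => [_|/negbT d124]; first by case: ifP => [hc _|//]; case: (ncol _ _ _ hc v1 v2 v4).
case: ifP => [_|/negbT d134]; first by case: ifP => [hc _|//]; case: (ncol _ _ _ hc v1 v3 v4).
case: ifP => [_|/negbT d234]; first by case: ifP => [hc _|//]; case: (ncol _ _ _ hc v2 v3 v4).
move=> hcol.
have h5 : t5 \in iota t4.+1 (27 - t4).
  by rewrite mem_iota l45 addSn subnKC // -ltnS (ltn_trans l45 l5).
have [o [ho hol]] := collect5P hcol h5.
pose U5 := Lt ltab t1 t2 t5 * Lt ltab t3 t4 t5.
pose V5 := Lt ltab t1 t4 t5 * Lt ltab t2 t3 t5.
have nus : forall i, (i < 28)%N -> nth 0 [seq Lt ltab t1 t2 i * Lt ltab t3 t4 i | i <- iota 0 28] i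
                 = Lt ltab t1 t2 i * Lt ltab t3 t4 i.
  by move=> i hi; rewrite (nth_map 0%N) ?size_iota // nth_iota.
have nvs : forall i, (i < 28)%N -> nth 0 [seq Lt ltab t1 t4 i * Lt ltab t2 t3 i | i <- iota 0 28] i
                 = Lt ltab t1 t4 i * Lt ltab t2 t3 i.
  by move=> i hi; rewrite (nth_map 0%N) ?size_iota // nth_iota.
move: ho; rewrite /scan5 (nus _ l5) (nvs _ l5) -/U5 -/V5.
case: ifP => [_ //|huv].
set P1 := map3 phi (pE t1) in v1 *; set P2 := map3 phi (pE t2) in v2 *.
set P3 := map3 phi (pE t3) in v3 *; set P4 := map3 phi (pE t4) in v4 *.
set P5 := map3 phi (pE t5) in v5 *.
have n123 : lev (cross P1 P2) P3 != 0 by rewrite hL // phi_eq0.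
have n124 : lev (cross P1 P2) P4 != 0 by rewrite hL // phi_eq0.
have n134 : lev (cross P1 P3) P4 != 0 by rewrite hL // phi_eq0.
set U := lprod (cross P1 P2) (cross P3 P4).
set V := lprod (cross P1 P4) (cross P2 P3).
have [al [be ha']] : exists al be, a = lin6 al be U V.
  apply: (pencil (p1 := P1) (p2 := P2) (p3 := P3) (p4 := P4)) => //.
  - by rewrite /U QF_lprod lev_crossl mul0r mul0rn.
  - by rewrite /U QF_lprod lev_crossr mul0r mul0rn.
  - by rewrite /U QF_lprod lev_crossl mulr0 mul0rn.
  - by rewrite /U QF_lprod lev_crossr mulr0 mul0rn.
  - by rewrite /V QF_lprod lev_crossl mul0r mul0rn.
  - by rewrite /V QF_lprod lev_crossl mulr0 mul0rn.
  - by rewrite /V QF_lprod lev_crossr mulr0 mul0rn.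
  - by rewrite /V QF_lprod lev_crossr mul0r mul0rn.
  - by rewrite /U BF_lprod lev_crossl lev_crossr !mul0r addr0.
  - by rewrite /V BF_lprod lev_crossl lev_crossr !mul0r addr0.
  - rewrite /U BF_lprod lev_crossl mul0r add0r (lev_cross_cyc P3 P4 P1) (lev_cross_cyc P4 P1 P3).
    by rewrite mulf_neq0.
  - rewrite /V BF_lprod lev_crossl mul0r add0r (lev_cross_swap P1 P4 P2) (lev_cross_cyc P4 P1 P2).
    rewrite (lev_cross_cyc P2 P3 P1) (lev_cross_cyc P3 P1 P2).
    by rewrite mulf_neq0 // oppr_eq0.
have eU5 : QF U P5 = (phi U5) *+ 2 by rewrite /U QF_lprod /P1 /P2 /P3 /P4 /P5 !hL // phiM.
have eV5 : QF V P5 = (phi V5) *+ 2 by rewrite /V QF_lprod /P1 /P2 /P3 /P4 /P5 !hL // phiM.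
have hlin : al * phi U5 + be * phi V5 = 0.
  apply/eqP; rewrite -mulrn2_eq0 mulrnDl -!mulrnAr -eU5 -eV5 -QF_lin6 -ha'.
  by rewrite v5.
have hab : (al != 0) || (be != 0).
  apply: contraT; rewrite negb_or !negbK => /andP[/eqP al0 /eqP be0].
  move: ha; rewrite ha' al0 be0 /cdet /lin6 /= !mul0r !add0r.
  by rewrite !(mul0r, mul0rn, add0r, subr0) eqxx.
have huv' : (phi U5 != 0) || (phi V5 != 0).
  by rewrite !phi_eq0 -negb_and huv.
have [t ht [hal hbe]] := dstep hab hlin huv'.
set c := conicE t1 t2 t3 t4 U5 V5.
have hac : a = scale6 t (map6 phi c).
  rewrite ha' hal hbe lin6_scale /c /conicE map_lin6 !map_lprod !map_cross.
  by rewrite rmorphN.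
have hpat : forall i, (i < 28)%N ->
   (QF a (map3 phi (pE i)) == 0) =
   (V5 * nth 0 [seq Lt ltab t1 t2 i * Lt ltab t3 t4 i | i <- iota 0 28] i -
    U5 * nth 0 [seq Lt ltab t1 t4 i * Lt ltab t2 t3 i | i <- iota 0 28] i == 0).
  move=> i hi; rewrite (nus _ hi) (nvs _ hi) hac QF_scale6 -map_QF mulf_eq0 (negbTE ht) /=.
  rewrite phi_eq0 /c /conicE QF_lin6 !QF_lprod !mulrnAr -mulrnDl mulNr mulrn2E.
  by rewrite !Lt_ltab.
have hP : [seq i <- iota 0 28 |
    V5 * nth 0 [seq Lt ltab t1 t2 i * Lt ltab t3 t4 i | i <- iota 0 28] i -
    U5 * nth 0 [seq Lt ltab t1 t4 i * Lt ltab t2 t3 i | i <- iota 0 28] i == 0]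
    = [:: t1, t2, t3, t4, t5 & T'].
  rewrite -hT /T; apply: eq_in_filter => i; rewrite mem_iota => /andP[_ hi].
  by rewrite hpat.
rewrite hP.
have hsz : (5 < size [:: t1, t2, t3, t4, t5 & T'])%N by rewrite -hT.
have -> : take 5%N [:: t1, t2, t3, t4, t5 & T'] = rcons [:: t1; t2; t3; t4] t5 by rewrite /= take0.
rewrite eqxx.
rewrite hsz.
case: eqP => [hc0 | /eqP hc0] ho.
  move: ha; rewrite hac cdet_scale6 -map_cdet hc0 rmorph0 mulr0 eqxx.
  by [].
have hcl : c \in l by apply: hol; case: ho => <-.
exists c; first exact: (gen_mem hQ hl0 hcl).
exact: (same_conic_scale hA ht hac).
Qed.

Definition sR : seq 'M[algC]_3 := map (fun c => conmat (map6 phi c)) gR.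

Lemma sR_mem A : A \in sR -> exists2 c, c \in gR & A = conmat (map6 phi c).
Proof. by move/mapP. Qed.

Lemma patE_mem c i : (i < 28)%N -> (i \in patE c) = (QF c (pE i) == 0).
Proof. by move=> hi; rewrite /patE mem_filter mem_iota leq0n add0n hi !andbT. Qed.

Lemma size_P16 : size P16 = 16%N. Proof. by rewrite P16_eq size_map. Qed.
Lemma size_P12 : size P12 = 12%N. Proof. by rewrite P12_eq size_map. Qed.

Lemma count_pt i : (i < 28)%N ->
  count (fun A => on_conic A (nth 0 P28 i)) sR = count (fun pt => i \in pt) psR.
Proof.
move=> hi.
have e : forall c, on_conic (conmat (map6 phi c)) (nth 0 P28 i) = (i \in patE c).
  by move=> c; rewrite nth_P28 // on_conic_E patE_mem.
rewrite /sR /psR !count_map; apply: eq_count => c; exact: e.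
Qed.

Lemma count_npts (P : nat -> bool) : count (fun A => P (npts A)) sR = count (fun pt => P (size pt)) psR.
Proof.
have e : forall c, P (npts (conmat (map6 phi c))) = P (size (patE c)) by move=> c; rewrite npts_E.
rewrite /sR /psR !count_map; apply: eq_count => c; exact: e.
Qed.

Theorem mainTheorem1 :
  exists s : seq 'M[algC]_3,
    [/\ size s = 2736%N,
        (forall A, A \in s -> smooth_conic A /\ (6 <= npts A)%N) /\
        (forall i j, (i < size s)%N -> (j < size s)%N ->
            same_conic (nth 0 s i) (nth 0 s j) -> i = j),
        (forall A, smooth_conic A -> (6 <= npts A)%N ->
            exists2 B, B \in s & same_conic A B),
        [/\ count (fun A => npts A == 6%N) s = 2616%N,
            count (fun A => npts A == 7%N) s = 96%N,
            count (fun A => npts A == 8%N) s = 24%N &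
            all (fun A => npts A <= 8)%N s] &
        ((forall p, p \in P16 -> count (fun A => on_conic A p) s = 546%N) /\
         (forall p, p \in P12 -> count (fun A => on_conic A p) s = 652%N))].
Proof.
have [c6 /and5P[c7 c8 hu h16 h12]] := andP BC_rest.
exists sR; split.
- by rewrite size_map BC_size.
- split.
  + move=> A /sR_mem [c hc ->]; split.
      split; first exact: conmat_sym.
      rewrite detE ?conmat_sym // coords_conmat -map_cdet phi_eq0.
      by move/allP: BC_det => /(_ c hc).
    rewrite npts_E; move/allP: BC_6_8 => /(_ (patE c)) h.
    by case/andP: (h (map_f patE hc)).
  + move=> i j; rewrite size_map => hi hj.
    rewrite (nth_map (mk6 0 0 0 0 0 0)) // (nth_map (mk6 0 0 0 0 0 0)) //.
    set ci := nth _ gR i; set cj := nth _ gR j.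
    case=> k hk hB.
    have hpat : patE ci = patE cj.
      apply: eq_in_filter => x; rewrite mem_iota => /andP[_ hx].
      rewrite -!on_conic_E hB on_conic_scale //.
    have : nth [::] psR i = nth [::] psR j.
      rewrite /psR (nth_map (mk6 0 0 0 0 0 0) _ _ hi) (nth_map (mk6 0 0 0 0 0 0) _ _ hj).
      exact: hpat.
    by move/eqP; rewrite nth_uniq ?size_map // => /eqP.
- move=> A hA h6; have [c hc hs] := complete hA h6; rewrite -gR_E in hc.
  by exists (conmat (map6 phi c)); first exact: (map_f _ hc).
- split.
  + by rewrite (count_npts (fun n => n == 6%N)) (eqP c6).
  + by rewrite (count_npts (fun n => n == 7%N)) (eqP c7).
  + by rewrite (count_npts (fun n => n == 8%N)) (eqP c8).
  + apply/allP => A /sR_mem [c hc ->]; rewrite npts_E.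
    move/allP: BC_6_8 => /(_ (patE c) (map_f patE hc)) /andP[_ ->].
    by [].
- split.
  + move=> p hp; have [i hi <-] := nthP 0 hp.
    rewrite size_P16 in hi.
    have -> : nth 0 P16 i = nth 0 P28 i.
      by rewrite /P28 (nth_cat 0 P16 P12) size_P16 hi.
    rewrite count_pt; last exact: (ltn_trans hi).
    by move/allP: h16 => /(_ i); rewrite mem_iota hi => /(_ isT) /eqP.
  + move=> p hp; have [i hi <-] := nthP 0 hp.
    rewrite size_P12 in hi.
    have -> : nth 0 P12 i = nth 0 P28 (16 + i).
      by rewrite /P28 (nth_cat 0 P16 P12) size_P16 ltnNge leq_addr /= addKn.
    rewrite count_pt; last by rewrite -[28%N]/(16 + 12)%N ltn_add2l.
    by move/allP: h12 => /(_ (16 + i)%N); rewrite mem_iota leq_addr ltn_add2l hi => /(_ isT) /eqP.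
Qed.
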